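(* Fix a positive integer $t$, a constant $c_0>0$, and sequences $(\lambda_n)$, $(\mu_n)$ of positive reals tending to infinity. Then for all sufficiently large $n$ the following holds. Let $G$ be a bipartite graph on $n$ vertices with no copy of $\theta_{3,t}[2]$; $x_1,x_2$ distinct vertices; $S\subset N(x_1,x_2)$ with $s:=|S|\ge n^{1/3}$; $\lambda=\lambda_n$, $\mu=\mu_n$; $\mathcal{Q}$ a set of $q\ge c_0\frac{s^2n^{2/3}\lambda^{27/10}}{\mu^{11/10}}$ ordered tuples $(y_1,y_2,z_1,z_2)\in V(G)^4$ each satisfying (P1) $y_1,y_2\in S$ and $y_iz_j\in E(G)$ for all $i,j\in\{1,2\}$, (P2) $x_1,x_2,y_1,y_2,z_1,z_2$ distinct, (P3) $d_S(z_1),d_S(z_2)\le\lambda s/n^{1/3}$, (P4) $d(x_1,x_2,z_1,z_2)<6t$, (P5) $\mu n^{1/3}\le d(z_1,z_2)\le2\mu n^{1/3}$; and $\mathcal{A}$ a set of tuples $(y_1,y_2,z_1,z_2,w_1,w_2,y_2',z_1',z_2')\in V(G)^9$ each satisfying (a) $(y_1,y_2,z_1,z_2),(y_1,y_2',z_1',z_2')\in\mathcal{Q}$, (b) $w_1,w_2\in N(z_1,z_2,z_1',z_2')$, (c) $d(y_1,y_2,w_1,w_2)<6t$ and $d(y_1,y_2',w_1,w_2)<6t$, (d) $x_1,x_2,y_1,y_2,z_1,z_2,w_1,w_2,y_2',z_1',z_2'$ all distinct. Let $\mathcal{A}'$ be the set of tuples in $\mathcal{A}$ with $d(z_1,z_1',z_2')<\mu^{7/5}n^{1/6}$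 and $d(z_2,z_1',z_2')<\mu^{7/5}n^{1/6}$. Then for any fixed vertices $y_1,y_2,y_2',z_1',z_2'$, the number of $(z_1,z_2,w_1,w_2)\in V(G)^4$ with $(y_1,y_2,z_1,z_2,w_1,w_2,y_2',z_1',z_2')\in\mathcal{A}'$ is at most $g:=10^8t^3\mu^{14/5}n^{1/3}$.
   Context: $N(v_1,\dots,v_k)$ is the common neighbourhood of $v_1,\dots,v_k$, $d(v_1,\dots,v_k)=|N(v_1,\dots,v_k)|$, and $d_S(v)=|N(v)\cap S|$. $\theta_{3,t}$ is the union of $t$ paths of length $3$ sharing the same two endpoints and pairwise internally vertex-disjoint; $F[2]$ is obtained from $F$ by replacing each vertex by an independent set of size $2$ and each edge by a copy of $K_{2,2}$. *)

(* Defs.v *)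
From HB Require Import structures.
From mathcomp Require Import all_boot all_order all_algebra.
From mathcomp Require Import all_classical all_reals all_analysis.
Set Implicit Arguments. Unset Strict Implicit. Unset Printing Implicit Defensive.
Import Order.TTheory GRing.Theory Num.Theory.

Definition simple_graph (T : finType) (e : rel T) : Prop :=
  (forall x y, e x y = e y x) /\ (forall x, ~~ e x x).

Definition bipartite (T : finType) (e : rel T) : Prop :=
  exists f : T -> bool, forall x y, e x y -> f x != f y.

Definition has_copy (H : finType) (eH : rel H) (T : finType) (e : rel T) : Prop :=
  exists f : H -> T, injective f /\ forall a b, eH a b -> e (f a) (f b).

(* theta_{3,t}: vertices inl false = endpoint a, inl true = endpoint b,
   inr (i, false), inr (i, true) = the two internal vertices of path i,
   path i being a - (i,false) - (i,true) - b. *)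
Definition theta_V (t : nat) : finType := (bool + ('I_t * bool))%type.

Definition theta_adj0 (t : nat) (u v : theta_V t) : bool :=
  match u, v with
  | inl false, inr (_, false) => true
  | inr (i, false), inr (j, true) => i == j
  | inr (_, true), inl true => true
  | _, _ => false
  end.

Definition theta_adj (t : nat) : rel (theta_V t) :=
  fun u v => theta_adj0 u v || theta_adj0 v u.

(* F[2]: blow up each vertex into an independent pair, each edge into K_{2,2}. *)
Definition blowup2 (V : finType) (eF : rel V) : rel (V * bool)%type :=
  fun u v => eF u.1 v.1.

Definition theta32_free (t : nat) (T : finType) (e : rel T) : Prop :=
  ~ has_copy (blowup2 (@theta_adj t)) e.

Definition cnbh (T : finType) (e : rel T) (vs : seq T) : {set T} :=
  [set u | all (fun v => e v u) vs].

Definition cdeg (T : finType) (e : rel T) (vs : seq T) : nat := #|cnbh e vs|.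

Definition degS (T : finType) (e : rel T) (S : {set T}) (v : T) : nat :=
  #|[set u in S | e v u]|.

(* Main.v *)
Require Import Defs.
From HB Require Import structures.
From mathcomp Require Import all_boot all_order all_algebra.
From mathcomp Require Import all_classical all_reals all_analysis.
From mathcomp Require Import zify ring lra.
Import Order.TTheory GRing.Theory Num.Theory.
Import numFieldNormedType.Exports.
Set Implicit Arguments. Unset Strict Implicit. Unset Printing Implicit Defensive.

Definition vseq (T : Type) (p : T * T * T * T) : seq T := [:: p.1.2; p.2; p.1.1.1; p.1.1.2].

Lemma size_flatten_vseq (T : Type) (s : seq (T*T*T*T)) :
  size (flatten (map (@vseq T) s)) = (4 * size s)%N.
Proof. by elim: s => //= p s ->; rewrite mulnS. Qed.

Lemma hitting (T : finType) (P : {set T*T*T*T}) k :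
  (exists s : seq (T*T*T*T), [/\ size s = k.+1, all (fun p => p \in P) s &
        pairwise (fun p q => [disjoint vseq p & vseq q]) s])
  \/ (exists U : {set T}, (#|U| <= 4 * k)%N /\
        forall p, p \in P -> exists2 u, u \in U & u \in vseq p).
Proof.
elim: k => [|k IH].
  case: (set_0Vmem P) => [-> | [p pP]].
    by right; exists (@finset.set0 T); split; [rewrite cards0 | move=> p; rewrite inE].
  by left; exists [:: p]; rewrite /= pP.
case: IH => [[s [hs hP hd]] | [U [hU hUP]]]; last first.
  right; exists U; split => //; apply: leq_trans hU _.
  by rewrite leq_mul2l leqnSn orbT.
set U := [set x in flatten (map (@vseq T) s)].
case: (boolP [forall p in P, [exists u in U, u \in vseq p]]).
  move/forall_inP => h; right; exists U; split.
    by rewrite cardsE (leq_trans (card_size _)) // size_flatten_vseq hs.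
  by move=> p pP; case/exists_inP: (h p pP) => u uU up; exists u.
rewrite negb_forall_in => /exists_inP [p pP hp].
left; exists (p :: s); split; first by rewrite /= hs.
  by rewrite /= pP hP.
rewrite pairwise_cons hd andbT; apply/allP => q qs.
rewrite disjoint_has; apply/hasPn => x xp; apply/negP => xq; move: hp; apply/negP; rewrite negbK.
apply/exists_inP; exists x => //; rewrite inE; apply/flattenP.
by exists (vseq q) => //; apply: map_f.
Qed.

Lemma fiber_bound (T1 T2 : finType) (A : {set T1}) (B : {set T2}) (f : T1 -> T2) k :
  (forall x, x \in A -> f x \in B) ->
  (forall y, y \in B -> #|[set x in A | f x == y]| <= k)%N ->
  (#|A| <= #|B| * k)%N.
Proof.
move=> fAB hk.
rewrite -sum1_card (partition_big f (mem B)) //=.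
rewrite -sum_nat_const; apply: leq_sum => y yB.
apply: leq_trans (hk y yB); rewrite -sum1_card.
by apply: eq_leq; apply: eq_bigl => x; rewrite inE.
Qed.

Lemma union_bound (I T : finType) (U : {set I}) (C : {set T}) (P : I -> T -> bool) :
  (forall p, p \in C -> exists2 u, u \in U & P u p) ->
  (#|C| <= \sum_(u in U) #|[set p in C | P u p]|)%N.
Proof.
move=> hC.
have -> : (\sum_(u in U) #|[set p in C | P u p]| = \sum_(u in U) \sum_(p in C) (P u p : nat))%N.
  apply: eq_bigr => u _; rewrite -sum1_card big_mkcond /= [in RHS]big_mkcond /=.
  by apply: eq_bigr => p _; rewrite inE; case: (p \in C); case: (P u p).
rewrite exchange_big /= -sum1_card; apply: leq_sum => p pC.
have [u uU Pu] := hC p pC.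
by rewrite (bigD1 u) //= Pu leq_addr.
Qed.

Lemma nth_flatten_vseq (T : Type) (x0 : T) p0 (s : seq (T*T*T*T)) i j :
  (i < size s)%N -> (j < 4)%N ->
  nth x0 (flatten (map (@vseq T) s)) (4 * i + j) = nth x0 (vseq (nth p0 s i)) j.
Proof.
elim: s i => [|p s IH] [|i] // hi hj.
  by move: hj; clear; case: j => [|[|[|[|]]]].
have -> : (4 * i.+1 + j = (4 * i + j).+4)%N by lia.
by rewrite /= IH.
Qed.

Lemma uniq_blocks (T : finType) (A : seq T) (s : seq (T*T*T*T)) :
  uniq A -> (forall p, p \in s -> uniq (A ++ vseq p)) ->
  pairwise (fun p q => [disjoint vseq p & vseq q]) s ->
  uniq (A ++ flatten (map (@vseq T) s)).
Proof.
move=> uA hs hd; rewrite cat_uniq uA /=; apply/andP; split.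
  apply/hasPn => x /flattenP [v /mapP [p ps ->] xv].
  by move: (hs p ps); rewrite cat_uniq => /and3P [_ /hasPn /(_ x xv) ? _].
elim: s hs hd => [|p s IH] // hs; rewrite pairwise_cons => /andP [hp hd].
rewrite map_cons.
change (uniq (vseq p ++ flatten (map (@vseq T) s))).
rewrite cat_uniq; apply/and3P; split.
- by move: (hs p (mem_head _ _)); rewrite cat_uniq => /and3P [].
- apply/hasPn => x /flattenP [v /mapP [q qs ->] xq]; apply/negP => xp.
  move/allP: hp => /(_ q qs); rewrite disjoint_has => /hasPn /(_ x xp).
  by rewrite /= xq.
- by apply: IH => // q qs; apply: hs; rewrite inE qs orbT.
Qed.

Definition idx (t : nat) (u : theta_V t * bool) : nat :=
  match u.1 with
  | inl c => ((if c then 2 else 0) + u.2)%N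
  | inr (i, c) => (4 + (4 * i + ((if c then 2 else 0) + u.2)))%N
  end.

Lemma idx_inj t : injective (@idx t).
Proof.
move=> [[[] | [i []]] []] [[[] | [j []]] []] h; rewrite /idx /= in h.
all: try (by []).
all: try (exfalso; lia).
all: (have hij : i = j by apply: val_inj => /=; lia); by rewrite hij.
Qed.

Lemma idx_lt t (u : theta_V t * bool) : (idx u < 4 + 4 * t)%N.
Proof.
case: u => [[[] | [i []]] []]; rewrite /idx /=; try lia; have := ltn_ord i; lia.
Qed.

Lemma theta_embed (T : finType) (e : rel T) (t : nat) (a1 a2 y1 y2 : T)
    (s : seq (T*T*T*T)) :
  simple_graph e -> size s = t ->
  uniq [:: a1; a2; y1; y2] ->
  pairwise (fun p q => [disjoint vseq p & vseq q]) s ->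
  (forall p, p \in s -> uniq ([:: a1; a2; y1; y2] ++ vseq p)) ->
  (forall p, p \in s -> forall b b' : bool,
     [/\ e (nth a1 [:: a1; a2; y1; y2] b) (nth a1 (vseq p) b'),
         e (nth a1 (vseq p) b) (nth a1 (vseq p) (2 + b')) &
         e (nth a1 (vseq p) (2 + b)) (nth a1 [:: a1; a2; y1; y2] (2 + b'))]) ->
  has_copy (blowup2 (@theta_adj t)) e.
Proof.
move=> [esym _] hs uA hd hu hE.
set A := [:: a1; a2; y1; y2].
set L := A ++ flatten (map (@vseq T) s).
have uL : uniq L by apply: uniq_blocks.
have sL : size L = (4 + 4 * t)%N by rewrite size_cat size_flatten_vseq hs.
exists (fun u => nth a1 L (idx u)); split.
  move=> u v h; apply: idx_inj; apply/eqP.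
  by rewrite -(nth_uniq a1 _ _ uL) ?sL ?idx_lt // h.
have nA : forall n, (n < 4)%N -> nth a1 L n = nth a1 A n.
  by move=> n hn; rewrite nth_cat hn.
have nP : forall i j, (i < t)%N -> (j < 4)%N ->
    nth a1 L (4 + (4 * i + j)) = nth a1 (vseq (nth (a1, a1, a1, a1) s i)) j.
  move=> i j hi hj; rewrite nth_cat /=.
  by rewrite addKn (nth_flatten_vseq _ (a1, a1, a1, a1)) // hs.
clearbody L.
have key : forall (x y : theta_V t) (b b' : bool), theta_adj0 x y ->
    e (nth a1 L (idx (x, b))) (nth a1 L (idx (y, b'))).
  move=> [[|]|[i [|]]] [[|]|[j [|]]] b b' //=; rewrite /idx /=.
  - move=> _; have hj := ltn_ord j.
    have pin : nth (a1, a1, a1, a1) s j \in s by rewrite mem_nth // hs.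
    rewrite nA; last by case: b.
    rewrite nP //; last by case: b'.
    by case: (hE _ pin b b').
  - move=> _; have hi := ltn_ord i.
    have pin : nth (a1, a1, a1, a1) s i \in s by rewrite mem_nth // hs.
    rewrite (nA (2 + b')); last by case: b'.
    rewrite nP //; last by case: b.
    by case: (hE _ pin b b').
  - move/eqP => <-; have hi := ltn_ord i.
    have pin : nth (a1, a1, a1, a1) s i \in s by rewrite mem_nth // hs.
    rewrite nP //; last by case: b.
    rewrite nP //; last by case: b'.
    by case: (hE _ pin b b').
move=> u v; rewrite /blowup2 /theta_adj => /orP [h|h]; first exact: key.
rewrite esym; exact: key.
Qed.

Lemma uniq_pick (T : eqType) (x0 : T) (l2 : seq T) (I : seq nat) :
  uniq l2 -> uniq I -> all (fun i => i < size l2)%N I -> uniq (map (nth x0 l2) I).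
Proof.
move=> u2 uI hI; rewrite map_inj_in_uniq //.
move=> i j /(allP hI) hi /(allP hI) hj /eqP; by rewrite nth_uniq // => /eqP.
Qed.

Lemma cnbhE (T : finType) (e : rel T) vs u : (u \in cnbh e vs) = all (fun v => e v u) vs.
Proof. by rewrite inE. Qed.

Lemma count_D (T : finType) (e : rel T) (y1 y2 : T) (K : nat)
    (D : {set T*T*T*T}) (B : {set T*T}) :
  (forall x y, e x y = e y x) ->
  (forall z1 z2 w1 w2, (z1, z2, w1, w2) \in D ->
     [/\ [&& e y1 z1, e y1 z2, e y2 z1 & e y2 z2],
         w1 \in cnbh e [:: z1; z2] /\ w2 \in cnbh e [:: z1; z2],
         (cdeg e [:: y1; y2; w1; w2] < K)%N & (w1, w2) \in B]) ->
  (#|D| <= #|B| * (K * K))%N.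
Proof.
move=> esym hD; apply: (@fiber_bound _ _ D B (fun p => (p.1.2, p.2))).
  by move=> [[[z1 z2] w1] w2] /hD [].
move=> [w1 w2] _; set F := [set x in D | _].
case: (set_0Vmem F) => [-> | [p0 hp0]]; first by rewrite cards0.
have hK : (cdeg e [:: y1; y2; w1; w2] < K)%N.
  move: hp0; rewrite inE => /andP [].
  case: p0 => [[[z1 z2] w1'] w2'] /hD [_ _ hk _] /eqP [e1 e2].
  by rewrite -e1 -e2.
set Z := cnbh e [:: y1; y2; w1; w2].
have sF : F \subset (fun ab : T * T => (ab.1, ab.2, w1, w2)) @: finset.setX Z Z.
  apply/fintype.subsetP => -[[[z1 z2] w1'] w2']; rewrite inE => /andP [pD /eqP [e1 e2]].
  rewrite e1 e2 in pD *.
  case: (hD _ _ _ _ pD) => /and4P [a b c d] [hw1 hw2] _ _.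
  move: hw1 hw2; rewrite !cnbhE /= !andbT => /andP [f1 f2] /andP [g1 g2].
  apply/imsetP; exists (z1, z2) => //.
  by rewrite !inE /= (esym w1 z1) (esym w2 z1) (esym w1 z2) (esym w2 z2) a b c d f1 f2 g1 g2.
apply: leq_trans (subset_leq_card sF) _.
apply: leq_trans (leq_imset_card _ _) _.
by rewrite cardsX leq_mul // ltnW.
Qed.

Unset Implicit Arguments.
Local Open Scope ring_scope.

Theorem mainTheorem13 (R : realType) (t : nat) (c0 : R)
  (lam mu : nat -> R) :
  (0 < t)%N -> 0 < c0 ->
  (forall n, 0 < lam n) -> (forall n, 0 < mu n) ->
  (lam @ \oo --> +oo)%classic -> (mu @ \oo --> +oo)%classic ->
  exists N : nat, forall n : nat, (N <= n)%N ->
  forall (T : finType) (e : rel T),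
  #|T| = n -> simple_graph e -> bipartite e -> theta32_free t e ->
  forall (x1 x2 : T) (S : {set T}),
  x1 != x2 -> S \subset cnbh e [:: x1; x2] ->
  let s := #|S| in
  let nR : R := n%:R in
  let l := lam n in
  let m := mu n in
  (nR `^ (3^-1) <= s%:R) ->
  forall Q : {set T * T * T * T},
  (c0 * s%:R ^+ 2 * nR `^ (2 / 3) * l `^ (27 / 10) / m `^ (11 / 10)
     <= #|Q|%:R) ->
  (forall y1 y2 z1 z2, (y1, y2, z1, z2) \in Q ->
     [/\ [&& y1 \in S, y2 \in S, e y1 z1, e y1 z2, e y2 z1 & e y2 z2],
         uniq [:: x1; x2; y1; y2; z1; z2],
         (degS e S z1)%:R <= l * s%:R / nR `^ (3^-1) /\
         (degS e S z2)%:R <= l * s%:R / nR `^ (3^-1),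
         (cdeg e [:: x1; x2; z1; z2] < 6 * t)%N &
         m * nR `^ (3^-1) <= (cdeg e [:: z1; z2])%:R /\
         (cdeg e [:: z1; z2])%:R <= 2 * m * nR `^ (3^-1)]) ->
  forall A : T -> T -> T -> T -> T -> T -> T -> T -> T -> bool,
  (forall y1 y2 z1 z2 w1 w2 y2' z1' z2',
     A y1 y2 z1 z2 w1 w2 y2' z1' z2' ->
     [/\ (y1, y2, z1, z2) \in Q /\ (y1, y2', z1', z2') \in Q,
         w1 \in cnbh e [:: z1; z2; z1'; z2'] /\
         w2 \in cnbh e [:: z1; z2; z1'; z2'],
         (cdeg e [:: y1; y2; w1; w2] < 6 * t)%N /\
         (cdeg e [:: y1; y2'; w1; w2] < 6 * t)%N &
         uniq [:: x1; x2; y1; y2; z1; z2; w1; w2; y2'; z1'; z2']]) ->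
  let A' := fun y1 y2 z1 z2 w1 w2 y2' z1' z2' =>
     [&& A y1 y2 z1 z2 w1 w2 y2' z1' z2',
         (cdeg e [:: z1; z1'; z2'])%:R < m `^ (7 / 5) * nR `^ (6^-1)
       & (cdeg e [:: z2; z1'; z2'])%:R < m `^ (7 / 5) * nR `^ (6^-1)] in
  forall y1 y2 y2' z1' z2' : T,
  (#|[set p : T * T * T * T |
       let: (z1, z2, w1, w2) := p in A' y1 y2 z1 z2 w1 w2 y2' z1' z2']|%:R
   <= 10 ^+ 8 * t%:R ^+ 3 * m `^ (14 / 5) * nR `^ (3^-1) :> R).
Proof.
move=> t_gt0 c0_gt0 lam_gt0 mu_gt0 lam_oo mu_oo.
have : (\forall n \near \oo, 1 <= mu n)%classic by move/cvgryPge: mu_oo; apply.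
case=> N _ hN; exists N => n hn T e hT hsg hbip hfree x1 x2 S hx12 hS s nR l m hs
  Q hQ hQP A hA A' y1 y2 y2' z1' z2'.
have m1 : 1 <= m by apply: hN.
have m0 : 0 <= m by apply: le_trans m1.
case: (hsg) => esym _.
set M := m `^ (7 / 5) * nR `^ (6^-1).
set n3 := nR `^ (3^-1).
set C := [set p : T * T * T * T | _].
have hCp : forall z1 z2 w1 w2, (z1, z2, w1, w2) \in C ->
  [/\ [&& e y1 z1, e y1 z2, e y2 z1 & e y2 z2],
      w1 \in cnbh e [:: z1; z2; z1'; z2'] /\ w2 \in cnbh e [:: z1; z2; z1'; z2'],
      (cdeg e [:: y1; y2; w1; w2] < 6 * t)%N,
      uniq [:: x1; x2; y1; y2; z1; z2; w1; w2; y2'; z1'; z2'] &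
      [/\ (cdeg e [:: z1; z1'; z2'])%:R < M, (cdeg e [:: z2; z1'; z2'])%:R < M &
          (cdeg e [:: z1'; z2'])%:R <= 2 * m * n3]].
  move=> z1 z2 w1 w2; rewrite inE /= /A' => /and3P [hA0 h1 h2].
  case: (hA _ _ _ _ _ _ _ _ _ hA0) => [[q1 q2] hw [hd _] hu].
  case: (hQP _ _ _ _ q1) => /andP [_ /andP [_ hE4]] _ _ _ _.
  case: (hQP _ _ _ _ q2) => _ _ _ _ [_ hW].
  by split.
have G0 : 0 <= 10 ^+ 8 * t%:R ^+ 3 * m `^ (14 / 5) * n3.
  by rewrite !mulr_ge0 ?exprn_ge0 ?powR_ge0.
case: (set_0Vmem C) => [C0 | [[[[z10 z20] w10] w20] p0C]].
  by rewrite C0 cards0.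
have [_ _ _ hu0 [_ _ hW]] := hCp _ _ _ _ p0C.
case: (hitting C t.-1) => [[s0 [hs0 hall hd]] | [U [hU hUC]]].
  exfalso; apply: hfree.
  apply: (@theta_embed T e t z1' z2' y1 y2 s0) => //.
  - by rewrite hs0 prednK.
  - exact: (@uniq_pick _ x1 _ [:: 9; 10; 2; 3]%N hu0 erefl erefl).
  - move=> [[[z1 z2] w1] w2] /(allP hall) /hCp [_ _ _ hu _].
    exact: (@uniq_pick _ x1 _ [:: 9; 10; 2; 3; 6; 7; 4; 5]%N hu erefl erefl).
  - move=> [[[z1 z2] w1] w2] /(allP hall) /hCp [hE4 [hw1 hw2] _ _ _] b b'.
    move: hE4 hw1 hw2; rewrite !cnbhE /= !andbT.
    move=> /and4P [a1 a2 a3 a4] /and4P [c1 c2 c3 c4] /and4P [d1 d2 d3 d4].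
    by case: b; case: b'; split; first [assumption | (rewrite esym; assumption)].
have h1 := @union_bound _ _ U C (fun u p => u \in vseq p) hUC.
set D12 := fun u => [set p in C | (p.1.1.1 == u) || (p.1.1.2 == u)].
set D34 := fun u => [set p in C | (p.1.2 == u) || (p.2 == u)].
have hsplit : forall u, (#|[set p in C | u \in vseq p]| <= #|D12 u| + #|D34 u|)%N.
  move=> u; apply: leq_trans (leq_card_setU (D12 u) (D34 u)).1.
  apply: subset_leq_card; apply/fintype.subsetP => -[[[z1 z2] w1] w2].
  rewrite !inE /= => /andP [-> hu] /=.
  move: hu; rewrite !(eq_sym u).
  by case/or4P => ->; rewrite ?orbT.
set K := (6 * t)%N.
have hD12 : forall u, #|D12 u|%:R <= M ^+ 2 * K%:R ^+ 2.
  move=> u; case: (set_0Vmem (D12 u)) => [->|[[[[z1 z2] w1] w2] hp]].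
    by rewrite cards0 mulr_ge0 // sqr_ge0.
  set Nu := cnbh e [:: u; z1'; z2'].
  have hNu : (#|Nu|)%:R < M.
    move: hp; rewrite inE /= => /andP [/hCp [_ _ _ _ [c1 c2 _]]].
    by case/orP => /eqP e1; rewrite /Nu -e1.
  have hnat : (#|D12 u| <= #|finset.setX Nu Nu| * (K * K))%N.
    apply: (@count_D T e y1 y2 K (D12 u) (finset.setX Nu Nu) esym) => v1 v2 r1 r2.
    rewrite inE /= => /andP [/hCp [hE4 [hw1 hw2] hd _ _] hzu].
    split => //.
    - move: hw1 hw2; rewrite !cnbhE /= !andbT.
      by move=> /and4P [-> -> _ _] /and4P [-> -> _ _].
    - move: hw1 hw2; rewrite !inE /= !andbT.
      move=> /and4P [a1 a2 a3 a4] /and4P [b1 b2 b3 b4].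
      by case/orP: hzu => /eqP <-; rewrite ?a1 ?a2 ?b1 ?b2 a3 a4 b3 b4.
  move: hnat; rewrite -(ler_nat R) cardsX !natrM => /le_trans; apply.
  rewrite -!expr2; apply: ler_pM; rewrite ?exprn_ge0 //.
  by rewrite expr2 ler_pM // ltW.
set W := cnbh e [:: z1'; z2'].
have hD34 : forall u, #|D34 u|%:R <= 2 * (2 * m * n3) * K%:R ^+ 2.
  move=> u.
  have hnat : (#|D34 u| <= #|finset.setX [set u] W :|: finset.setX W [set u]| * (K * K))%N.
    apply: (@count_D T e y1 y2 K (D34 u) _ esym) => v1 v2 r1 r2.
    rewrite inE /= => /andP [/hCp [hE4 [hw1 hw2] hd _ _] hzu].
    split => //.
    - move: hw1 hw2; rewrite !cnbhE /= !andbT.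
      by move=> /and4P [-> -> _ _] /and4P [-> -> _ _].
    - move: hw1 hw2; rewrite !inE /= !andbT.
      move=> /and4P [a1 a2 a3 a4] /and4P [b1 b2 b3 b4].
      by rewrite a3 a4 b3 b4 !andbT.
  have hB : (#|finset.setX [set u] W :|: finset.setX W [set u]| <= #|W| + #|W|)%N.
    apply: leq_trans (leq_card_setU _ _).1 _.
    by rewrite !cardsX cards1 mul1n muln1.
  have hnat2 : (#|D34 u| <= (#|W| + #|W|) * (K * K))%N.
    exact: leq_trans hnat (leq_mul hB (leqnn _)).
  move: hnat2; rewrite -(ler_nat R) !natrM natrD => /le_trans; apply.
  rewrite -expr2; apply: ler_wpM2r; first exact: exprn_ge0.
  move: hW; rewrite /cdeg -/W => hW; lra.
have hsum : (#|C| <= \sum_(u in U) (#|D12 u| + #|D34 u|))%N.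
  apply: leq_trans h1 _; apply: leq_sum => u _; exact: hsplit.
set X := M ^+ 2 * K%:R ^+ 2 + 2 * (2 * m * n3) * K%:R ^+ 2.
have n30 : 0 <= n3 by apply: powR_ge0.
have X0 : 0 <= X.
  by rewrite /X; apply: addr_ge0; apply: mulr_ge0; rewrite ?sqr_ge0 // !mulr_ge0.
have hCX : #|C|%:R <= #|U|%:R * X.
  apply: (@le_trans _ _ (\sum_(u in U) (#|D12 u| + #|D34 u|))%N%:R).
    by rewrite ler_nat.
  rewrite natr_sum; apply: (@le_trans _ _ (\sum_(u in U) X)).
    by apply: ler_sum => u _; rewrite natrD; apply: lerD.
  by rewrite sumr_const mulr_natl.
apply: (le_trans hCX).
have hU' : #|U|%:R <= (4 * t)%:R :> R.
  rewrite ler_nat; apply: leq_trans hU _; rewrite leq_mul2l; apply/orP; right.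
  exact: leq_pred.
apply: (le_trans (ler_wpM2r X0 hU')).
have hMG : M ^+ 2 = m `^ (14 / 5) * n3.
  rewrite /M exprMn /n3 -!powR_mulrn ?powR_ge0 // -!powRrM.
  by congr (_ `^ _ * _ `^ _); field.
have hmG : m * n3 <= m `^ (14 / 5) * n3.
  apply: ler_wpM2r => //.
  rewrite -{1}(powRr1 m0); apply: ler_powR => //; lra.
rewrite /X hMG /K !natrM.
set P := m `^ (14 / 5).
set tR := t%:R.
have tR0 : 0 <= tR by apply: ler0n.
have -> : 4%:R * tR * (P * n3 * (6%:R * tR) ^+ 2 + 2 * (2 * m * n3) * (6%:R * tR) ^+ 2)
   = tR ^+ 3 * (144 * (P * n3) + 576 * (m * n3)) by ring.
have -> : 10 ^+ 8 * tR ^+ 3 * P * n3 = tR ^+ 3 * (10 ^+ 8 * (P * n3)) by ring.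
apply: ler_wpM2l; first exact: exprn_ge0.
have b0 : 0 <= m * n3 by apply: mulr_ge0.
move: hmG b0; set a := P * n3; set b := m * n3 => hab b0; lra.
Qed.
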